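(* Let $G$ be a finite connected graph and $\alpha\ge 1$ an integer. If $H$ is the disjoint union of $\alpha$ copies of $G$, then $D(H)=\min\{k : D(G,k)\ge \alpha\}$.
   Context: A $k$-labeling of a graph $G$ is a map $\phi:V(G)\to\{1,\dots,k\}$; an automorphism $\pi$ preserves $\phi$ if $\phi(\pi(v))=\phi(v)$ for all $v$; $\phi$ is distinguishing if only the identity automorphism preserves it. Two distinguishing $k$-labelings $\phi,\phi'$ are equivalent if some automorphism $\pi$ satisfies $\phi'(\pi(v))=\phi(v)$ for all $v$; $D(G,k)$ is the number of equivalence classes of distinguishing $k$-labelings of $G$. $D(H)$ is the smallest $k$ such that $H$ has a distinguishing $k$-labeling. *)

(* Defs.v *)
From mathcomp Require Import all_boot all_order all_fingroup.
Set Implicit Arguments. Unset Strict Implicit. Unset Printing Implicit Defensive.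

(* A finite simple graph is a finType T with a symmetric irreflexive e : rel T. *)

Definition is_aut (T : finType) (e : rel T) (p : {perm T}) : bool :=
  [forall x, forall y, e (p x) (p y) == e x y].

(* A k-labeling uses labels 'I_k = {0,..,k-1} (in bijection with {1,..,k}). *)
Definition preserves (T : finType) (k : nat) (p : {perm T}) (phi : {ffun T -> 'I_k}) : bool :=
  [forall v, phi (p v) == phi v].

Definition distinguishing (T : finType) (e : rel T) (k : nat) (phi : {ffun T -> 'I_k}) : bool :=
  [forall p : {perm T}, (is_aut e p && preserves p phi) ==> (p == 1%g)].

Definition equiv_lab (T : finType) (e : rel T) (k : nat) (phi phi' : {ffun T -> 'I_k}) : bool :=
  [exists p : {perm T}, is_aut e p && [forall v, phi' (p v) == phi v]].

Definition D_count (T : finType) (e : rel T) (k : nat) : nat :=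
  #|[set [set phi' | equiv_lab e phi phi'] | phi in [set phi : {ffun T -> 'I_k} | distinguishing e phi]]|.

Definition has_dist_lab (T : finType) (e : rel T) (k : nat) : bool :=
  [exists phi : {ffun T -> 'I_k}, distinguishing e phi].

Definition union_rel (a : nat) (T : finType) (e : rel T) : rel ('I_a * T) :=
  fun u v => (u.1 == v.1) && e u.2 v.2.

Definition is_min (P : nat -> Prop) (m : nat) : Prop :=
  P m /\ forall k, P k -> m <= k.

(* Main.v *)
Require Import Defs.
From mathcomp Require Import all_boot all_order all_fingroup.
Set Implicit Arguments. Unset Strict Implicit. Unset Printing Implicit Defensive.

Lemma autP (T : finType) (e : rel T) (p : {perm T}) :
  reflect (forall x y, e (p x) (p y) = e x y) (is_aut e p).
Proof.
apply: (iffP forallP) => [H x y | H x]; first by apply/eqP; exact: (forallP (H x) y).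
by apply/forallP => y; rewrite H.
Qed.

Lemma aut1 (T : finType) (e : rel T) : is_aut e (1%g : {perm T}).
Proof. by apply/autP => x y; rewrite !perm1. Qed.

Lemma autV (T : finType) (e : rel T) (p : {perm T}) : is_aut e p -> is_aut e p^-1%g.
Proof. move/autP=> H; apply/autP => x y. by rewrite -[in RHS](permKV p x) -[in RHS](permKV p y) H. Qed.

Lemma autM (T : finType) (e : rel T) (p q : {perm T}) :
  is_aut e p -> is_aut e q -> is_aut e (p * q)%g.
Proof. move=>/autP Hp /autP Hq; apply/autP => x y; by rewrite !permM Hq Hp. Qed.

Lemma equiv_refl (T : finType) (e : rel T) k (a : {ffun T -> 'I_k}) : equiv_lab e a a.
Proof. apply/existsP; exists 1%g; rewrite aut1 /=; apply/forallP => v; by rewrite perm1. Qed.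

Lemma equiv_cls (T : finType) (e : rel T) k (a b : {ffun T -> 'I_k}) : equiv_lab e a b ->
  [set c | equiv_lab e a c] = [set c | equiv_lab e b c].
Proof.
case/existsP => p /andP [pa /forallP pb].
apply/setP => c; rewrite !inE; apply/existsP/existsP.
- case=> r /andP [ra /forallP rc]; exists (p^-1 * r)%g; rewrite autM ?autV //=.
  apply/forallP => v; rewrite permM (eqP (rc _)) -(eqP (pb (p^-1 v)%g)) permKV //.
- case=> s /andP [sa /forallP sc]; exists (p * s)%g; rewrite autM //=.
  by apply/forallP => v; rewrite permM (eqP (sc _)) (eqP (pb _)).
Qed.

Lemma comp_const (T : finType) (e : rel T) (econn : forall x y : T, connect e x y) a
  (P : {perm ('I_a * T)}) : is_aut (@union_rel a T e) P ->
  forall i x y, (P (i,x)).1 = (P (i,y)).1.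
Proof.
move/autP=> HP i x y; case/connectP: (econn x y) => p pth ->{y}.
elim: p x pth => [|z p IH] x //= /andP [exz pth].
rewrite -(IH z pth).
have : @union_rel a T e (P (i,x)) (P (i,z)) by rewrite HP /union_rel /= eqxx exz.
by case/andP => /eqP.
Qed.

Definition mkf a (T : finType) (s : {perm 'I_a}) (q : 'I_a -> {perm T}) (u : 'I_a * T) :=
  (s u.1, q u.1 u.2).

Lemma mkf_inj a (T : finType) s q : injective (@mkf a T s q).
Proof. move=> [i x] [j y] []; rewrite /=. by move=> /perm_inj -> /perm_inj ->. Qed.

Definition mkP a (T : finType) s q : {perm ('I_a * T)} := perm (@mkf_inj a T s q).

Lemma mkPE a (T : finType) s q u : @mkP a T s q u = (s u.1, q u.1 u.2).
Proof. by rewrite permE. Qed.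

Lemma mkP_aut a (T : finType) (e : rel T) s q :
  (forall i, is_aut e (q i)) -> is_aut (@union_rel a T e) (@mkP a T s q).
Proof.
move=> Hq; apply/autP => [[i x] [j y]]; rewrite !mkPE /union_rel /= (inj_eq perm_inj).
case: eqP => [<-|] //=. by have /autP -> := Hq i.
Qed.

Lemma dir1 (T : finType) (e : rel T) (x0 : T) alpha k (Phi : {ffun 'I_alpha * T -> 'I_k}) :
  distinguishing (@union_rel alpha T e) Phi -> alpha <= D_count e k.
Proof.
move=> dPhi.
pose phi i : {ffun T -> 'I_k} := [ffun x => Phi (i,x)].
have dist i : distinguishing e (phi i).
  apply/forallP => q; apply/implyP => /andP [qa /forallP qp].
  pose P := mkP 1%g (fun j => if j == i then q else 1%g).
  have PA : is_aut (@union_rel alpha T e) P.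
    by apply: mkP_aut => j; case: ifP => // _; exact: aut1.
  have PP : preserves P Phi.
    apply/forallP => -[j x]; rewrite mkPE /= perm1.
    case: (j =P i) => [->|_] /=; last by rewrite perm1.
    by have := qp x; rewrite !ffunE.
  have := forallP dPhi P; rewrite PA PP /= => /eqP /permP /(_ (i,x0)) P1.
  apply/eqP/permP => x; rewrite perm1.
  have := forallP dPhi P; rewrite PA PP /= => /eqP /permP /(_ (i,x)).
  by rewrite mkPE !perm1 /= eqxx => -[].
have neq i j : i != j -> ~~ equiv_lab e (phi i) (phi j).
  move=> nij; apply/negP => /existsP [p /andP [pa /forallP pp]].
  have nji : j != i by rewrite eq_sym.
  pose P := mkP (tperm i j) (fun l => if l == i then p else if l == j then p^-1%g else 1%g).
  have PA : is_aut (@union_rel alpha T e) P.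
    apply: mkP_aut => l; case: ifP => _; first done.
    by case: ifP => _; [exact: autV | exact: aut1].
  have PP : preserves P Phi.
    apply/forallP => -[l x]; rewrite mkPE /=.
    case: (l =P i) => [->|nli].
      by rewrite tpermL; have := pp x; rewrite !ffunE.
    case: (l =P j) => [->|nlj].
      rewrite tpermR; have := pp (p^-1 x)%g.
      by rewrite !ffunE permKV eq_sym.
    rewrite tpermD ?perm1 //.
      by apply/eqP => E; apply: nli; rewrite E.
    by apply/eqP => E; apply: nlj; rewrite E.
  have := forallP dPhi P; rewrite PA PP /= => /eqP /permP /(_ (i,x0)).
  rewrite mkPE perm1 /= tpermL => -[] eji.
  by move: nji; rewrite eji eqxx.
have inj : injective (fun i => [set c | equiv_lab e (phi i) c]).
  move=> i j /= E; case: (i =P j) => // nij.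
  have : phi j \in [set c | equiv_lab e (phi j) c] by rewrite inE equiv_refl.
  rewrite -E inE => H.
  by have := neq i j (introN eqP nij); rewrite H.
rewrite /D_count.
have -> : alpha = #|[set [set c | equiv_lab e (phi i) c] | i : 'I_alpha]|.
  by rewrite card_imset ?card_ord.
apply: subset_leq_card; apply/subsetP => C /imsetP [i _ ->]; apply/imsetP.
by exists (phi i); rewrite ?inE.
Qed.

Lemma dir2 (T : finType) (e : rel T) (x0 : T) (econn : forall x y : T, connect e x y)
  alpha k : alpha <= D_count e k -> has_dist_lab (@union_rel alpha T e) k.
Proof.
rewrite /D_count.
set S := [set _ | _ in _] => hD.
have : forall i : 'I_alpha, exists phi, distinguishing e phi &&
      (nth set0 (enum S) i == [set c | equiv_lab e phi c]).
  move=> i; have : nth set0 (enum S) i \in S.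
    by rewrite -mem_enum mem_nth // -cardE; exact: leq_trans (ltn_ord i) hD.
  by case/imsetP => phi; rewrite inE => dphi ->; exists phi; rewrite dphi eqxx.
case/fin_all_exists => f Hf.
have fd i : distinguishing e (f i) by case/andP: (Hf i).
have fi i j : equiv_lab e (f i) (f j) -> i = j.
  move=> E; have := equiv_cls E.
  case/andP: (Hf i) => _ /eqP <-; case/andP: (Hf j) => _ /eqP <-.
  move/eqP; rewrite nth_uniq ?enum_uniq -?cardE ?(leq_trans (ltn_ord _) hD) //.
  by move/eqP/val_inj.
apply/existsP; exists [ffun u : 'I_alpha * T => f u.1 u.2].
apply/forallP => P; apply/implyP => /andP [PA /forallP PP].
have cc := comp_const econn PA.
apply/eqP/permP => -[i x]; rewrite perm1.
pose j := (P (i,x0)).1.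
have Pj y : (P (i,y)).1 = j by rewrite /j (cc i y x0).
have qinj : injective (fun y => (P (i,y)).2).
  move=> y z /= E.
  have : P (i,y) = P (i,z).
    by rewrite [P (i,y)]surjective_pairing [P (i,z)]surjective_pairing E !Pj.
  by move/perm_inj => -[].
pose q := perm qinj.
have qa : is_aut e q.
  apply/autP => y z; rewrite !permE /=.
  have /autP H := PA; have := H (i,y) (i,z).
  by rewrite /union_rel /= !Pj !eqxx.
have eq : equiv_lab e (f i) (f j).
  apply/existsP; exists q; rewrite qa /=; apply/forallP => y.
  by have := PP (i,y); rewrite !ffunE /= Pj permE.
have eij := fi _ _ eq.
have q1 : q = 1%g.
  apply/eqP; apply: (implyP (forallP (fd i) q)); rewrite qa /=.
  apply/forallP => y; have := PP (i,y); rewrite !ffunE /= Pj permE -eij //.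
move/permP: q1 => /(_ x); rewrite perm1 permE /= => qx.
by rewrite [P (i,x)]surjective_pairing Pj -eij qx.
Qed.

Theorem lemma3 (T : finType) (e : rel T) (x0 : T)
    (esym : symmetric e) (eirr : irreflexive e)
    (econn : forall x y : T, connect e x y)
    (alpha : nat) (halpha : 1 <= alpha) :
  forall m : nat,
    is_min (fun k => has_dist_lab (@union_rel alpha T e) k) m <->
    is_min (fun k => alpha <= D_count e k) m.
Proof.
have key k : has_dist_lab (@union_rel alpha T e) k <-> alpha <= D_count e k.
  split; [case/existsP => Phi; exact: dir1 | exact: dir2].
move=> m; rewrite /is_min; split => -[h1 h2]; split.
- by apply/key.
- by move=> k /key; apply: h2.
- by apply/key.
- by move=> k /key; apply: h2.
Qed.
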